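(* Let $K, C_K\subset\mathbb{R}^n$ be convex bodies such that $C_K$ is a completion of $K$, and for $\lambda\in[0,1]$ let $K_\lambda:=\lambda K+(1-\lambda)C_K$. Then for all $\lambda\in[0,1]$, \[ D(K_\lambda)=D(K)\quad\text{and}\quad w(K_\lambda)=\lambda w(K)+(1-\lambda)w(C_K). \]
   Context: A convex body is a compact convex subset of $\mathbb{R}^n$. $D(\cdot)$ denotes diameter (largest distance between two points) and $w(\cdot)$ the width (smallest distance between two distinct parallel supporting hyperplanes). $A+B=\{a+b: a\in A, b\in B\}$ is the Minkowski sum and $\lambda A=\{\lambda a: a\in A\}$. A completion of $K$ is a convex body $C_K$ with $K\subseteq C_K$ and $D(K)=D(C_K)=w(C_K)$. *)

(* Defs.v *)
From HB Require Import structures.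
From mathcomp Require Import all_boot all_order all_algebra.
From mathcomp Require Import all_classical all_reals all_analysis.
Set Implicit Arguments. Unset Strict Implicit. Unset Printing Implicit Defensive.
Import Order.TTheory GRing.Theory Num.Theory.
Import numFieldNormedType.Exports.
Local Open Scope classical_set_scope.
Local Open Scope ring_scope.

Section ConvexBodies.
Variables (R : realType) (n : nat).
Local Notation E := 'rV[R]_n.

Definition edot (x y : E) : R := \sum_(i < n) x ord0 i * y ord0 i.
Definition enorm (x : E) : R := Num.sqrt (edot x x).
Definition edist (x y : E) : R := enorm (x - y).

Definition convex_set (K : set E) : Prop :=
  forall x y t, K x -> K y -> 0 <= t -> t <= 1 -> K (t *: x + (1 - t) *: y).
Definition convex_body (K : set E) : Prop :=
  K !=set0 /\ compact K /\ convex_set K.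

Definition mink_sum (A B : set E) : set E := [set a + b | a in A & b in B].
Definition mink_scale (l : R) (A : set E) : set E := [set l *: a | a in A].

Definition diam (K : set E) : R :=
  sup [set edist x y | x in K & y in K].

Definition supp (K : set E) (u : E) : R := sup [set edot x u | x in K].

(* width: smallest distance between two parallel supporting hyperplanes;
   for a unit normal u the two supporting hyperplanes orthogonal to u are at
   distance h_K(u) + h_K(-u) *)
Definition width (K : set E) : R :=
  inf [set supp K u + supp K (- u) | u in [set u : E | enorm u = 1]].

Definition completion (K C : set E) : Prop :=
  convex_body C /\ K `<=` C /\ diam K = diam C /\ diam C = width C.

End ConvexBodies.

(* Main.v *)
Require Import Defs.
From HB Require Import structures.
From mathcomp Require Import all_boot all_order all_algebra.
From mathcomp Require Import all_classical all_reals all_analysis.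
From mathcomp Require Import ring lra.
Import Order.TTheory GRing.Theory Num.Theory.
Import numFieldNormedType.Exports.
Local Open Scope classical_set_scope.
Local Open Scope ring_scope.

Lemma sup_scale (R : realType) (S : set R) (c : R) :
  0 <= c -> has_sup S -> sup [set c * x | x in S] = c * sup S.
Proof.
move=> c0 [[s0 Ss0] [b hb]].
have hsS : has_sup S by split; [exists s0 | exists b].
have neT : [set c * x | x in S] !=set0 by exists (c * s0); exists s0.
case: (eqVneq c 0) => [->|cn0].
  have -> : [set 0 * x | x in S] = [set 0 : R].
    apply/seteqP; split => y /=.
      by case=> x _ <-; rewrite mul0r.
    by move=> ->; exists s0 => //; rewrite mul0r.
  by rewrite sup1 mul0r.
have cp : 0 < c by rewrite lt_def cn0 c0.
have ubT : ubound [set c * x | x in S] (c * sup S).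
  by move=> y [x Sx <-]; rewrite ler_wpM2l //; apply: sup_upper_bound.
have hsT : has_sup [set c * x | x in S] by split => //; exists (c * sup S).
apply/le_anti/andP; split; first exact: ge_sup.
rewrite -ler_pdivlMl //; apply: ge_sup; first by exists s0.
move=> x Sx; rewrite ler_pdivlMl //; apply: sup_upper_bound => //.
by exists x.
Qed.

Lemma inf_aff (R : realType) (T : Type) (U : set T) (g : T -> R) (c d : R) :
  U !=set0 -> (forall u, U u -> 0 <= g u) -> 0 <= c ->
  inf [set c * g u + d | u in U] = c * inf [set g u | u in U] + d.
Proof.
move=> [u0 Uu0] g0 c0.
have lbG : has_lbound [set g u | u in U] by exists 0 => _ [u Uu <-]; exact: g0.
have lbL : has_lbound [set c * g u + d | u in U].
  exists d => _ [u Uu <-]; have := g0 _ Uu; have := mulr_ge0 c0 (g0 _ Uu); lra.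
apply/le_anti/andP; split; last first.
  apply: lb_le_inf; first by exists (c * g u0 + d); exists u0.
  move=> _ [u Uu <-]; rewrite lerD2r ler_wpM2l //; apply: ge_inf => //.
  by exists u.
case: (eqVneq c 0) => [ce|cn0].
  subst c; rewrite mul0r add0r.
  have := ge_inf lbL (ex_intro2 _ _ u0 Uu0 erefl); rewrite mul0r add0r; exact.
have cp : 0 < c by rewrite lt_def cn0 c0.
rewrite -lerBlDr -ler_pdivrMl //.
apply: lb_le_inf; first by exists (g u0); exists u0.
move=> _ [u Uu <-]; rewrite ler_pdivrMl // lerBlDr.
by apply: ge_inf => //; exists u.
Qed.

Lemma has_sup_scale (R : realType) (S : set R) (c : R) :
  0 <= c -> has_sup S -> has_sup [set c * x | x in S].
Proof.
move=> c0 [[s0 Ss0] [b hb]]; split; first by exists (c * s0); exists s0.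
exists (c * b) => _ [x Sx <-]; rewrite ler_wpM2l //; exact: hb.
Qed.

Section Aux.
Variables (R : realType) (n : nat).
Local Notation E := 'rV[R]_n.
Implicit Types x y u v : E.

Lemma edotDl x y u : edot (x + y) u = edot x u + edot y u.
Proof. rewrite /edot -big_split /=; apply eq_bigr => i _; rewrite !mxE; ring. Qed.
Lemma edotZl a x u : edot (a *: x) u = a * edot x u.
Proof. rewrite /edot mulr_sumr; apply eq_bigr => i _; rewrite !mxE; ring. Qed.
Lemma edotNl x u : edot (- x) u = - edot x u.
Proof. rewrite /edot -sumrN; apply eq_bigr => i _; rewrite !mxE; ring. Qed.
Lemma edotBl x y u : edot (x - y) u = edot x u - edot y u.
Proof. by rewrite edotDl edotNl. Qed.
Lemma edotC x u : edot x u = edot u x.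
Proof. rewrite /edot; apply eq_bigr => i _; ring. Qed.
Lemma edotNr x u : edot x (- u) = - edot x u.
Proof. by rewrite edotC edotNl edotC. Qed.
Lemma edotZr a x u : edot x (a *: u) = a * edot x u.
Proof. by rewrite edotC edotZl edotC. Qed.
Lemma edotBr x y u : edot u (x - y) = edot u x - edot u y.
Proof. by rewrite edotC edotBl !(edotC u). Qed.
Lemma edot_ge0 x : 0 <= edot x x.
Proof. rewrite /edot; apply: sumr_ge0 => i _; exact: sqr_ge0. Qed.

Lemma enorm_ge0 x : 0 <= enorm x.
Proof. exact: sqrtr_ge0. Qed.
Lemma enorm_sqr x : enorm x ^+ 2 = edot x x.
Proof. by rewrite /enorm sqr_sqrtr // edot_ge0. Qed.

Lemma cs_unit x u : enorm u = 1 -> edot x u <= enorm x.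
Proof.
move=> hu.
have uu : edot u u = 1 by rewrite -enorm_sqr hu expr1n.
set t := edot x u.
have h := edot_ge0 (x - t *: u).
rewrite edotBl !edotBr !edotZl !edotZr uu (edotC u x) -/t in h.
have h2 : t ^+ 2 <= enorm x ^+ 2 by rewrite enorm_sqr; lra.
have := enorm_ge0 x => h0.
case: (lerP t 0) => ht; first lra.
by rewrite -(ler_pXn2r (isT : (0 < 2)%N)) // nnegrE; lra.
Qed.

Lemma coord_le x i : `|x ord0 i| <= `|x|.
Proof. rewrite [X in _ <= X]/Num.norm /= mx_normrE.
 by apply: (le_trans _ (le_bigmax _ _ (ord0, i))) => //=.
Qed.

Lemma enormN u : enorm (- u) = enorm u.
Proof. by rewrite /enorm edotNl edotNr opprK. Qed.

Lemma enorm_le (z : E) : enorm z <= Num.sqrt (n%:R : R) * `|z|.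
Proof.
rewrite /enorm -(ger0_norm (normr_ge0 z)) -sqrtr_sqr -sqrtrM ?ler0n //.
rewrite ler_wsqrtr // /edot.
have -> : n%:R * `|z| ^+ 2 = \sum_(i < n) `|z| ^+ 2.
  by rewrite sumr_const card_ord mulr_natl.
apply: ler_sum => i _; rewrite -expr2 -real_normK ?num_real //.
idtac. rewrite lerXn2r ?nnegrE ?normr_ge0 //; exact: coord_le.
Qed.

Lemma bounded_of_compact (C : set E) : compact C -> exists M, forall x, C x -> `|x| <= M.
Proof.
move=> /compact_bounded [M [_ hM]]; exists (M + 1) => x Cx.
by apply: (hM (M + 1)) => //; rewrite ltrDl.
Qed.

Lemma has_sup_dot (X : set E) M u : X !=set0 -> (forall x, X x -> `|x| <= M) ->
  enorm u = 1 -> has_sup [set edot x u | x in X].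
Proof.
move=> [x0 X0] hM hu; split; first by exists (edot x0 u); exists x0.
exists (Num.sqrt n%:R * M) => _ [x Xx <-].
apply: (le_trans (cs_unit x u hu)); apply: (le_trans (enorm_le x)).
by rewrite ler_wpM2l ?sqrtr_ge0 ?hM.
Qed.

Lemma has_sup_dist (X : set E) M : X !=set0 -> (forall x, X x -> `|x| <= M) ->
  has_sup [set Defs.edist x y | x in X & y in X].
Proof.
move=> [x0 X0] hM; split; first by exists (Defs.edist x0 x0); exists x0 => //; exists x0.
exists (Num.sqrt n%:R * (M + M)) => _ [x Xx [y Xy <-]].
apply: (le_trans (enorm_le _)); rewrite ler_wpM2l ?sqrtr_ge0 //.
by apply: (le_trans (ler_normB _ _)); apply: lerD; apply: hM.
Qed.

Lemma f_le_diam (X : set E) M u : X !=set0 -> (forall x, X x -> `|x| <= M) ->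
  enorm u = 1 -> supp X u + supp X (- u) <= diam X.
Proof.
move=> X0 hM hu.
have hu' : enorm (- u) = 1 by rewrite enormN.
have hA := @has_sup_dot X M u X0 hM hu; have hB := @has_sup_dot X M (- u) X0 hM hu'.
have hD := @has_sup_dist X M X0 hM.
rewrite -lerBrDr; apply: ge_sup; first by case: hA.
move=> _ [x Xx <-]; rewrite lerBrDr addrC -lerBrDr.
apply: ge_sup; first by case: hB.
move=> _ [y Yy <-]; rewrite lerBrDr addrC.
rewrite edotNr -edotBl.
apply: (le_trans (cs_unit _ _ hu)); apply: sup_upper_bound => //.
by exists x => //; exists y.
Qed.

Lemma f_ge0 (X : set E) M u : X !=set0 -> (forall x, X x -> `|x| <= M) ->
  enorm u = 1 -> 0 <= supp X u + supp X (- u).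
Proof.
move=> X0 hM hu.
have hu' : enorm (- u) = 1 by rewrite enormN.
have hA := @has_sup_dot X M u X0 hM hu; have hB := @has_sup_dot X M (- u) X0 hM hu'.
case: X0 => x0 X0.
have h1 : edot x0 u <= supp X u by apply: sup_upper_bound => //; exists x0.
have h2 : edot x0 (- u) <= supp X (- u) by apply: sup_upper_bound => //; exists x0.
rewrite edotNr in h2; lra.
Qed.

End Aux.

Theorem lemma2p2 (R : realType) (n : nat) (K CK : set 'rV[R]_n) :
  convex_body K -> convex_body CK -> completion K CK ->
  forall l : R, 0 <= l -> l <= 1 ->
    diam (mink_sum (mink_scale l K) (mink_scale (1 - l) CK)) = diam K /\
    width (mink_sum (mink_scale l K) (mink_scale (1 - l) CK)) =
      l * width K + (1 - l) * width CK.
Proof.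
move=> [K0 [cK convK]] [C0 [cC convC]] [_ [subKC [dKC dCw]]] l l0 l1.
have l10 : 0 <= 1 - l by rewrite subr_ge0.
have [M hM] := @bounded_of_compact R n CK cC.
have hMK : forall x, K x -> `|x| <= M by move=> x Kx; apply: hM; apply: subKC.
set Kl := mink_sum (mink_scale l K) (mink_scale (1 - l) CK).
have memKl : forall a b, K a -> CK b -> Kl (l *: a + (1 - l) *: b).
  move=> a b Ka Cb; exists (l *: a); first by exists a.
  by exists ((1 - l) *: b) => //; exists b.
have KlC : Kl `<=` CK.
  move=> _ [_ [a Ka <-] [_ [b Cb <-] <-]].
  exact: (convC a b l (subKC a Ka) Cb l0 l1).
have Kl0 : Kl !=set0.
  by case: K0 => a Ka; case: C0 => b Cb; exists (l *: a + (1 - l) *: b); apply: memKl.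
have hMKl : forall x, Kl x -> `|x| <= M by move=> x /KlC; apply: hM.
set D := diam K.
have fC : forall u, enorm u = 1 -> supp CK u + supp CK (- u) = D.
  move=> u hu; apply/le_anti/andP; split.
    by rewrite /D dKC; exact: (@f_le_diam R n CK M u C0 hM hu).
  rewrite /D dKC dCw /width; apply: ge_inf; last by exists u.
  by exists 0 => _ [v hv <-]; exact: (@f_ge0 R n CK M v C0 hM hv).
have suppKl : forall u, enorm u = 1 ->
    supp Kl u = l * supp K u + (1 - l) * supp CK u.
  move=> u hu.
  have hsK := @has_sup_dot R n K M u K0 hMK hu.
  have hsC := @has_sup_dot R n CK M u C0 hM hu.
  rewrite /supp -(@sup_scale R _ l l0 hsK) -(@sup_scale R _ (1 - l) l10 hsC).
  rewrite -sup_sumE; [|exact: has_sup_scale|exact: has_sup_scale].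
  congr sup; apply/seteqP; split.
  - move=> _ [p [_ [a Ka <-] [_ [b Cb <-] <-]] <-].
    exists (l * edot a u); first by exists (edot a u) => //; exists a.
    exists ((1 - l) * edot b u); first by exists (edot b u) => //; exists b.
    by rewrite edotDl !edotZl.
  - move=> _ [_ [_ [a Ka <-] <-] [_ [_ [b Cb <-] <-] <-]].
    by exists (l *: a + (1 - l) *: b); [exact: memKl | rewrite edotDl !edotZl].
split; last first.
  rewrite /width.
  set U := [set u : 'rV[R]_n | enorm u = 1].
  have Wset : [set supp Kl u + supp Kl (- u) | u in U] =
      [set l * (supp K u + supp K (- u)) + (1 - l) * D | u in U].
    apply/seteqP; split => _ [u hu <-]; exists u => //.
      have hu' : enorm (- u) = 1 by rewrite enormN.
      by rewrite (suppKl u hu) (suppKl _ hu') -(fC u hu); ring.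
    have hu' : enorm (- u) = 1 by rewrite enormN.
    by rewrite (suppKl u hu) (suppKl _ hu') -(fC u hu); ring.
  rewrite Wset.
  case: (pselect (U !=set0)) => [Une|hn].
    rewrite inf_aff //; last first.
      by move=> u hu; exact: (@f_ge0 R n K M u K0 hMK hu).
    congr (_ + _); congr (_ * _).
    case: Une => u hu; rewrite -(fC u hu).
    apply/le_anti/andP; split; last first.
      by apply: ge_inf; [exists 0 => _ [v hv <-]; exact: (@f_ge0 R n CK M v C0 hM hv)
                        | exists u].
    apply: lb_le_inf; first by exists (supp CK u + supp CK (- u)); exists u.
    by move=> _ [v hv <-]; rewrite (fC v hv) (fC u hu).
  have U0 : U = set0.
    by apply/seteqP; split => x Ux //; exfalso; apply: hn; exists x.
  rewrite U0 !image_set0; ring.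
apply/le_anti/andP; split.
  apply: ge_sup.
    by case: Kl0 => p Kp; exists (Defs.edist p p); exists p => //; exists p.
  move=> _ [p Kp [q Kq <-]]; rewrite /D dKC.
  apply: sup_upper_bound; first exact: (@has_sup_dist R n CK M C0 hM).
  by exists p; [exact: KlC | exists q => //; exact: KlC].
rewrite leNgt; apply/negP => hlt.
set dl := diam Kl in hlt *.
have hD := @has_sup_dist R n Kl M Kl0 hMKl.
have dl0 : 0 <= dl.
  case: Kl0 => p Kp; apply: (le_trans (sqrtr_ge0 _)).
  by apply: sup_upper_bound => //; exists p => //; exists p.
set eps := (D - dl) / 3.
have e3 : 3 * eps = D - dl by rewrite /eps; field.
have epsp : 0 < eps by lra.
have [_ [x Kx [y Ky <-]] hxy] :=
  sup_adherent epsp (@has_sup_dist R n K M K0 hMK).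
rewrite -/(diam K) -/D in hxy.
have {}hxy : D - eps < enorm (x - y) by exact: hxy.
set r := enorm (x - y) in hxy.
have rp : 0 < r by lra.
set u := r^-1 *: (x - y).
have rr : edot (x - y) (x - y) = r ^+ 2 by rewrite /r enorm_sqr.
have hu : enorm u = 1.
  rewrite /enorm /u edotZl edotZr rr.
  have -> : r^-1 * (r^-1 * r ^+ 2) = 1 by field; rewrite gt_eqF.
  by rewrite sqrtr1.
have hxu : edot (x - y) u = r.
  by rewrite /u edotZr rr; field; rewrite gt_eqF.
have hu' : enorm (- u) = 1 by rewrite enormN.
have [_ [c Cc <-] hc] := sup_adherent epsp (@has_sup_dot R n CK M u C0 hM hu).
have [_ [c' Cc' <-] hc'] :=
  sup_adherent epsp (@has_sup_dot R n CK M (- u) C0 hM hu').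
rewrite -/(supp CK u) in hc; rewrite -/(supp CK (- u)) edotNr in hc'.
have fCu := fC u hu.
have Kp := memKl x c Kx Cc; have Kq := memKl y c' Ky Cc'.
have h1 : edot ((l *: x + (1 - l) *: c) - (l *: y + (1 - l) *: c')) u <= dl.
  apply: (le_trans (@cs_unit R n _ _ hu)); apply: sup_upper_bound => //.
  by exists (l *: x + (1 - l) *: c) => //; exists (l *: y + (1 - l) *: c').
rewrite edotBl !edotDl !edotZl in h1.
rewrite edotBl in hxu.
have m1 : 0 <= l * (edot x u - edot y u - (D - 2 * eps)) by apply: mulr_ge0 => //; lra.
have m2 : 0 <= (1 - l) * (edot c u - edot c' u - (D - 2 * eps)).
  by apply: mulr_ge0 => //; lra.
lra.
Qed.
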